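(* Let $h:[0,\infty)\to[0,\infty)$ be a super-multiplicative function, i.e. $h(xy)\ge h(x)h(y)$ for all $x,y\ge 0$, such that $h(t)\ge t$ for all $t\ge0$. Let $f:[a,b]\to\mathbb{R}$ be $h$-mid-convex, i.e. $$f\Big(\frac{x+y}{2}\Big)\le h\Big(\frac12\Big)\big(f(x)+f(y)\big)\quad\text{for all } x,y\in[a,b].$$ Then for every $n\in\mathbb{N}$, all $x_1,\dots,x_n\in[a,b]$ and all rational numbers $\lambda_1,\dots,\lambda_n\in\mathbb{Q}\cap[0,1]$ with $\sum_{i=1}^n\lambda_i=1$, $$f\Big(\sum_{i=1}^n\lambda_ix_i\Big)\le\sum_{i=1}^n h(\lambda_i)f(x_i).$$
   Context: The paper writes $h:\mathbb{R}^+\to\mathbb{R}^+$; here $\mathbb{R}^+$ is taken to be $[0,\infty)$. *)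

(* Defs.v *)
From HB Require Import structures.
From mathcomp Require Import all_boot all_order all_algebra.
From mathcomp Require Import reals.
Set Implicit Arguments. Unset Strict Implicit. Unset Printing Implicit Defensive.
Import Order.TTheory GRing.Theory Num.Theory.
Local Open Scope ring_scope.

(* h : [0,oo) -> [0,oo) modelled as a function R -> R, with all hypotheses
   required only on nonnegative arguments. *)
Definition nonneg_valued (R : realType) (h : R -> R) :=
  forall t, 0 <= t -> 0 <= h t.

Definition super_multiplicative (R : realType) (h : R -> R) :=
  forall x y, 0 <= x -> 0 <= y -> h x * h y <= h (x * y).

Definition h_midconvex (R : realType) (h : R -> R) (a b : R) (f : R -> R) :=
  forall x y, a <= x <= b -> a <= y <= b ->
    f ((x + y) / 2) <= h (2^-1) * (f x + f y).

(* Main.v *)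
Require Import Defs.
From HB Require Import structures.
From mathcomp Require Import all_boot all_order all_algebra.
From mathcomp Require Import reals.
From mathcomp Require Import ring lra.
Import Order.TTheory GRing.Theory Num.Theory.
Local Open Scope ring_scope.

Section S.
Variable R : realType.

Lemma h_id (h : R -> R) (h_nonneg : nonneg_valued h)
  (h_supmul : super_multiplicative h)
  (h_ge_id : forall t, 0 <= t -> t <= h t) t : 0 <= t -> h t = t.
Proof.
have h1 : h 1 = 1.
  have := h_supmul 1 1 ler01 ler01; have := h_ge_id 1 ler01; rewrite mulr1.
  move=> H1 H2; apply/eqP; rewrite eq_le H1 andbT.
  rewrite -{3}(mulr1 (h 1)) in H2; rewrite -(ler_pM2l (lt_le_trans ltr01 H1)) //.
move=> t0; rewrite le0r in t0; case/orP: t0 => [/eqP->|tp].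
  have := h_supmul 0 2 (lexx _) (ler0n _ 2); rewrite mul0r.
  have := h_ge_id 2 (ler0n _ 2); have := h_nonneg 0 (lexx _); move=> A B C.
  have D := ler_wpM2l A B.
  apply/eqP; rewrite eq_le A andbT; lra.
have ti : 0 < t^-1 by rewrite invr_gt0.
have := h_supmul t t^-1 (ltW tp) (ltW ti); rewrite mulfV ?gt_eqF // h1.
have := h_ge_id t (ltW tp); have := h_ge_id _ (ltW ti).
move=> A B C; apply/eqP; rewrite eq_le B andbT.
have D := ler_wpM2l (le_trans (ltW tp) B) A.
have : h t * t^-1 <= 1 by apply: le_trans D C.
by rewrite ler_pdivrMr // mul1r.
Qed.

Lemma sum_const_seq (s : seq R) (c : R) : \sum_(y <- s) c = c *+ size s.
Proof. by elim: s => [|y s IH]; rewrite ?big_nil ?big_cons ?IH ?mulrS. Qed.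

Lemma sum_nseq (g : R -> R) k v : \sum_(y <- nseq k v) g y = g v *+ k.
Proof. by elim: k => [|k IH]; rewrite ?big_nil //= big_cons IH mulrS. Qed.

Variables (a b : R) (f : R -> R).
Hypothesis f_mid : forall x y, a <= x <= b -> a <= y <= b ->
    f ((x + y) / 2) <= 2^-1 * (f x + f y).

Lemma mean_in (s : seq R) : (0 < size s)%N -> (forall y, y \in s -> a <= y <= b) ->
  a <= (\sum_(y <- s) y) / (size s)%:R <= b.
Proof.
move=> sp hs; have np : 0 < (size s)%:R :> R by rewrite ltr0n.
rewrite ler_pdivlMr // ler_pdivrMr // !mulr_natr -!sum_const_seq.
apply/andP; split; rewrite !big_seq; apply: ler_sum => y ys; by case/andP: (hs y ys).
Qed.

Lemma dyadic k (s : seq R) : size s = (2 ^ k)%N -> (forall y, y \in s -> a <= y <= b) ->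
  f ((\sum_(y <- s) y) / (2 ^ k)%:R) * (2 ^ k)%:R <= \sum_(y <- s) f y.
Proof.
elim: k s => [|k IH] s.
  case: s => [|y [|z s]] //= _ _; rewrite !big_cons !big_nil !addr0 divr1 mulr1 //.
move=> sz hs.
have e1 : size (take (2 ^ k) s) = (2 ^ k)%N by rewrite size_take sz expnS; case: (2^k)%N => // m; rewrite ltn_Pmull.
have e2 : size (drop (2 ^ k) s) = (2 ^ k)%N by rewrite size_drop sz expnS mul2n -addnn addnK.
have hs1 : forall y, y \in take (2 ^ k) s -> a <= y <= b by move=> y /mem_take; apply: hs.
have hs2 : forall y, y \in drop (2 ^ k) s -> a <= y <= b by move=> y /mem_drop; apply: hs.
have I1 := IH _ e1 hs1; have I2 := IH _ e2 hs2.
have pk : (0 < 2 ^ k)%N by rewrite expn_gt0.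
have M1 := mean_in (take (2 ^ k) s) _ hs1; rewrite e1 in M1; have {M1}M1 := M1 pk.
have M2 := mean_in (drop (2 ^ k) s) _ hs2; rewrite e2 in M2; have {M2}M2 := M2 pk.
have Mid := f_mid _ _ M1 M2.
rewrite -(cat_take_drop (2 ^ k) s) !big_cat /=.
set P := (2 ^ k)%:R : R.
have PP : 0 < P by rewrite ltr0n.
have -> : (2 ^ k.+1)%:R = 2 * P :> R by rewrite expnS natrM.
move: Mid I1 I2; rewrite -/P.
set S1 := \sum_(y <- take _ _) y; set S2 := \sum_(y <- drop _ _) y.
have -> : (S1 + S2) / (2 * P) = (S1 / P + S2 / P) / 2 by field; rewrite gt_eqF.
set c := f _; set d := f (S1 / P); set e := f (S2 / P).
move=> H1 H2 H3.
have : c * P <= 2^-1 * (d + e) * P by rewrite ler_pM2r.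
move=> H4; lra.
Qed.

Lemma cauchy (s : seq R) : (0 < size s)%N -> (forall y, y \in s -> a <= y <= b) ->
  f ((\sum_(y <- s) y) / (size s)%:R) * (size s)%:R <= \sum_(y <- s) f y.
Proof.
move=> sp hs; set m := size s; set mu := (\sum_(y <- s) y) / m%:R.
have Mu := mean_in s sp hs; rewrite -/m -/mu in Mu.
have mk : (m <= 2 ^ m)%N by apply: ltnW; apply: ltn_expl.
pose t := s ++ nseq (2 ^ m - m) mu.
have st : size t = (2 ^ m)%N by rewrite size_cat size_nseq subnKC.
have ht : forall y, y \in t -> a <= y <= b.
  move=> y; rewrite mem_cat => /orP[/hs//|]; by move=> /nseqP[-> _].
have := dyadic _ _ st ht; rewrite /t !big_cat /= !sum_nseq.
have mp : 0 < m%:R :> R by rewrite ltr0n.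
have -> : \sum_(y <- s) y = mu * m%:R by rewrite /mu mulfVK // gt_eqF.
have p2 : (2 ^ m)%:R != 0 :> R by rewrite pnatr_eq0 -lt0n expn_gt0.
have E : (mu * m%:R + mu *+ (2 ^ m - m)) / (2 ^ m)%:R = mu.
  rewrite -[mu *+ _]mulr_natr natrB //; field; exact: p2.
rewrite E -[f mu *+ _]mulr_natr natrB //; lra.
Qed.
End S.

Theorem theorem2p3 (R : realType) (h : R -> R) (a b : R) (f : R -> R)
  (h_nonneg : nonneg_valued h)
  (h_supmul : super_multiplicative h)
  (h_ge_id : forall t, 0 <= t -> t <= h t)
  (f_mid : h_midconvex h a b f)
  (n : nat) (x : 'I_n -> R) (lam : 'I_n -> rat)
  (hx : forall i, a <= x i <= b)
  (hlam : forall i, 0 <= lam i <= 1)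
  (hsum : \sum_(i < n) lam i = 1) :
  f (\sum_(i < n) ratr (lam i) * x i) <= \sum_(i < n) h (ratr (lam i)) * f (x i).
Proof.
have hid := @h_id R h h_nonneg h_supmul h_ge_id.
have fm : forall x y, a <= x <= b -> a <= y <= b ->
    f ((x + y) / 2) <= 2^-1 * (f x + f y).
  move=> u v hu hv; have := f_mid u v hu hv; rewrite hid // invr_ge0 ler0n //.
pose d i := `|denq (lam i)|%N.
pose N := (\prod_(j < n) d j)%N.
pose M i := (\prod_(j < n | j != i) d j)%N.
have NM : forall i, N = (d i * M i)%N by move=> i; rewrite /N (bigD1 i).
pose k i := (`|numq (lam i)| * M i)%N.
have keyQ : forall i, lam i * N%:R = (k i)%:R :> rat.
  move=> i; rewrite (NM i) natrM /k natrM /d !natr_absz gtr0_norm ?denq_gt0 //.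
  rewrite ger0_norm ?numq_ge0; last by case/andP: (hlam i).
  by rewrite mulrA -numqE.
have key : forall i, ratr (lam i) * N%:R = (k i)%:R :> R.
  by move=> i; rewrite -[RHS](ratr_nat R) -keyQ rmorphM /= ratr_nat.
have Npos : (0 < N)%N.
  by apply: prodn_gt0 => j; rewrite /d absz_gt0 gt_eqF ?denq_gt0.
have NR : N%:R != 0 :> R by rewrite pnatr_eq0 -lt0n.
have rl : forall i, ratr (lam i) = (k i)%:R / N%:R :> R.
  by move=> i; rewrite -key mulfK.
pose s := flatten (map (fun i => nseq (k i) (x i)) (index_enum 'I_n)).
have sumS : forall g : R -> R, \sum_(y <- s) g y = \sum_(i < n) g (x i) *+ k i.
  by move=> g; rewrite big_flatten big_map; apply: eq_bigr => i _; rewrite sum_nseq.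
have sumk : \sum_(i < n) (k i)%:R = N%:R :> R.
  rewrite -(eq_bigr _ (fun i _ => key i)) -mulr_suml -rmorph_sum hsum rmorph1 mul1r //.
have sz : size s = N.
  apply/eqP; rewrite -(eqr_nat R) -sumk.
  have := @sum_const_seq R s 1; rewrite sumS => <-.
  by apply/eqP; apply: eq_bigr.
have hs : forall y, y \in s -> a <= y <= b.
  move=> y /flattenP [r /mapP [i _ ->]] /nseqP [-> _]; exact: hx.
have := @cauchy R a b f fm s; rewrite sz => /(_ Npos hs).
rewrite !sumS.
have -> : \sum_(i < n) ratr (lam i) * x i = (\sum_(i < n) x i *+ k i) / N%:R.
  rewrite mulr_suml; apply: eq_bigr => i _; by rewrite rl -[x i *+ _]mulr_natl mulrAC.
have -> : \sum_(i < n) h (ratr (lam i)) * f (x i) = (\sum_(i < n) f (x i) *+ k i) / N%:R.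
  rewrite mulr_suml; apply: eq_bigr => i _.
  rewrite hid ?ler0q ?(andP (hlam i)).1 //.
  by rewrite rl -[f (x i) *+ _]mulr_natl mulrAC.
by rewrite ler_pdivlMr // ltr0n.
Qed.
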